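(* The cometric $g^{ij}(u):=\sum_{k,l}g^{kl}(p)\frac{\partial u_i}{\partial p_k}\frac{\partial u_j}{\partial p_l}$, where $g^{kl}(p)=\frac{1-\delta^{kl}}{p_kp_l}$, can be written in terms of the invariant polynomials $u_1,\dots,u_n$ and is well defined on the quotient $\mathbb{C}^n/B_n$. Moreover, for each $i,j$, $g^{ij}(u)$ is a homogeneous polynomial in the $p$-variables of degree $2i+2j-4$, which depends at most linearly on $u_{n-1}$. In particular $g^{11}(u)=4(n^2-n)$.
   Context: $n\ge2$. $B_n$ acts on $\mathbb{C}^n$ (coordinates $p_1,\dots,p_n$) by permutations and sign changes of coordinates. $u_k=\sum_{1\le i_1<\dots<i_k\le n}p_{i_1}^2\cdots p_{i_k}^2$ for $k=1,\dots,n$ (elementary symmetric polynomials in $p_1^2,\dots,p_n^2$), a set of basic invariants; $u_k$ is homogeneous of degree $2k$ in $p$. *)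

(* Defs.v *)
From HB Require Import structures.
From mathcomp Require Import all_boot all_order all_algebra all_field.
From mathcomp Require Import mpoly.
Set Implicit Arguments. Unset Strict Implicit. Unset Printing Implicit Defensive.
Import Order.TTheory GRing.Theory Num.Theory.
Local Open Scope ring_scope.

(* Coordinate polynomials p_1..p_n are 'X_0 .. 'X_(n-1). *)
(* Basic invariants u_k = e_k(p_1^2, ..., p_n^2), k : nat (used for 1 <= k <= n). *)
Definition sq_tuple (n : nat) : n.-tuple {mpoly algC[n]} :=
  [tuple 'X_i ^+ 2 | i < n].

Definition uinv (n k : nat) : {mpoly algC[n]} :=
  (mesym n algC k) \mPo (sq_tuple n).

(* The tuple (u_1, ..., u_n): entry m is u_(m+1). *)
Definition u_tuple (n : nat) : n.-tuple {mpoly algC[n]} :=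
  [tuple uinv n (val m).+1 | m < n].

Definition gflat (n : nat) (p : 'I_n -> algC) (k l : 'I_n) : algC :=
  (if k == l then 0 else 1) / (p k * p l).

Definition gcomet (n i j : nat) (p : 'I_n -> algC) : algC :=
  \sum_(k < n) \sum_(l < n)
     gflat p k l * (mderiv k (uinv n i)).@[p] * (mderiv l (uinv n j)).@[p].

(* Main.v *)
Require Import Defs.
From HB Require Import structures.
From mathcomp Require Import all_boot all_order all_algebra all_field.
From mathcomp Require Import mpoly.
From mathcomp Require Import ring zify.
Import Order.TTheory GRing.Theory Num.Theory.
Local Open Scope ring_scope.
Set Implicit Arguments. Unset Strict Implicit. Unset Printing Implicit Defensive.

Section Num.
Variable n : nat.
Variable x : 'I_n -> algC.

Lemma reidx (F : {set 'I_n} -> algC) k c :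
  \sum_(h : {set 'I_n} | (#|h| == c.+1) && (k \in h)) F h =
  \sum_(h : {set 'I_n} | (#|h| == c) && (k \notin h)) F (k |: h).
Proof.
rewrite (reindex_onto (fun h => k |: h) (fun h => h :\ k)) /=; last first.
  by move=> h /andP[_ kh]; rewrite setD1K.
apply: eq_bigl => h; case: (boolP (k \in h)) => kh /=.
  rewrite andbF; apply/negbTE/negP => /andP[_ /eqP E].
  by have := setD11 k (k |: h); rewrite E kh.
by rewrite setU1K // eqxx setU11 cardsU1 kh andbT.
Qed.

Definition ee c := \sum_(h : {set 'I_n} | #|h| == c) \prod_(i in h) x i.
Definition Ek k c := \sum_(h : {set 'I_n} | (#|h| == c) && (k \notin h)) \prod_(i in h) x i.

Lemma Ek0 k : Ek k 0 = 1.
Proof.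
rewrite /Ek (bigD1 set0) /=; last by rewrite cards0 in_set0.
rewrite big_set0 big1 ?addr0 // => h /andP[/andP[/eqP h0 _] hn].
by move: hn; rewrite -cards_eq0 h0.
Qed.

Lemma ee0 : ee 0 = 1.
Proof.
rewrite /ee (bigD1 set0) /=; last by rewrite cards0.
rewrite big_set0 big1 ?addr0 // => h /andP[/eqP h0 hn].
by move: hn; rewrite -cards_eq0 h0.
Qed.

Lemma sumEk c : \sum_k Ek k c = (n%:R - c%:R) * ee c.
Proof.
rewrite /Ek /ee.
under eq_bigr => k _ do rewrite big_mkcondr /=.
rewrite exchange_big /= mulr_sumr; apply: eq_bigr => h /eqP hc.
rewrite -big_mkcond /= sumr_const.
have -> : #|[pred k | k \notin h]| = #|~: h|.
  by apply: eq_card => k; rewrite !inE.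
rewrite -[X in X = _]mulr_natr mulrC; congr (_ * _).
have := cardsC h; rewrite card_ord hc => /(congr1 (fun m => m%:R : algC)).
by rewrite natrD => <-; ring.
Qed.

Lemma Ek_rec k c : Ek k c.+1 + x k * Ek k c = ee c.+1.
Proof.
rewrite /ee (bigID (fun h : {set 'I_n} => k \in h)) /= addrC; congr (_ + _).
rewrite reidx mulr_sumr; apply: eq_bigr => h /andP[_ kh].
  by rewrite big_setU1.
Qed.

Definition S a b := \sum_k Ek k a * Ek k b.

Lemma S0 a : S a 0 = (n%:R - a%:R) * ee a.
Proof. by rewrite /S -sumEk; apply: eq_bigr => k _; rewrite Ek0 mulr1. Qed.

Lemma S_rec a b : S a b.+1 =
  (n%:R - a%:R) * ee a * ee b.+1 - (n%:R - b%:R) * ee a.+1 * ee b + S a.+1 b.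
Proof.
have E1 k : Ek k b.+1 = ee b.+1 - x k * Ek k b by rewrite -(Ek_rec k b); ring.
have E2 k : x k * Ek k a = ee a.+1 - Ek k a.+1 by rewrite -(Ek_rec k a); ring.
rewrite /S.
transitivity (\sum_k (ee b.+1 * Ek k a - ee a.+1 * Ek k b + Ek k a.+1 * Ek k b)).
  apply: eq_bigr => k _; rewrite E1 mulrBr mulrA (mulrC _ (x k)) E2.
  by rewrite mulrBl; ring.
rewrite !big_split /= sumrN -!mulr_sumr !sumEk; ring.
Qed.
Lemma S_closed a b : S a b = (n%:R - a%:R) * ee a * ee b +
  \sum_(m < b) (b%:R - a%:R - 2 * (m.+1)%:R) * ee (a + m.+1)%N * ee (b - m.+1)%N.
Proof.
elim: b a => [|b IH] a.
  by rewrite S0 big_ord0 ee0 mulr1 addr0.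
rewrite S_rec IH big_ord_recl /= subSS subn0.
have -> : \sum_(i < b) ((b.+1)%:R - a%:R - 2 * ((bump 0 i).+1)%:R) * ee (a + (bump 0 i).+1)%N * ee (b.+1 - (bump 0 i).+1)%N
  = \sum_(m < b) (b%:R - (a.+1)%:R - 2 * (m.+1)%:R) * ee (a.+1 + m.+1)%N * ee (b - m.+1)%N.
  apply: eq_bigr => m _; rewrite /bump /= add1n subSS addSnnS.
  congr (_ * _ * _); ring.
rewrite addn1; ring.
Qed.
End Num.

Section Poly.
Variable n : nat.

Lemma uinvE c : uinv n c =
  \sum_(h : {set 'I_n} | #|h| == c) \prod_(i in h) 'X_i ^+ 2.
Proof.
rewrite /uinv /mesym rmorph_sum; apply: eq_bigr => h _; rewrite rmorph_prod.
apply: eq_bigr => i _; rewrite /= comp_mpolyXU /sq_tuple nth_mktuple.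
by [].
Qed.

Lemma uinv_eval c (p : 'I_n -> algC) :
  (uinv n c).@[p] = ee (fun i => p i ^+ 2) c.
Proof.
rewrite uinvE rmorph_sum; apply: eq_bigr => h _; rewrite rmorph_prod.
by apply: eq_bigr => i _; rewrite rmorphXn /= mevalXU.
Qed.

Lemma dX1 k : mderiv k ('X_k : {mpoly algC[n]}) = 1.
Proof.
rewrite mderivX mnm1E eqxx scale1r.
by rewrite -{1}[U_(k)%MM]add0m addmK mpolyX0.
Qed.

Lemma dX0 k i : i != k -> mderiv k ('X_i : {mpoly algC[n]}) = 0.
Proof. by move=> ik; rewrite mderivX mnm1E (negbTE ik) scale0r. Qed.

Lemma dprod0 k (h : {set 'I_n}) : k \notin h ->
  mderiv k (\prod_(i in h) ('X_i : {mpoly algC[n]}) ^+ 2) = 0.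
Proof.
move=> kh; apply: (big_ind (fun q => mderiv k q = 0)).
- by rewrite -mpolyC1 mderivC.
- by move=> a b ha hb; rewrite mderivM ha hb mul0r mulr0 addr0.
move=> i ih; have ik : i != k by apply: contraNneq kh => <-.
by rewrite expr2 mderivM dX0 // mul0r mulr0 addr0.
Qed.

Lemma uinv_deriv k c (p : 'I_n -> algC) :
  (mderiv k (uinv n c.+1)).@[p] = 2 * p k * Ek (fun i => p i ^+ 2) k c.
Proof.
rewrite uinvE (bigID (fun h : {set 'I_n} => k \in h)) mderivD !(raddf_sum (mderiv k)).
rewrite [X in _ + X]big1 ?addr0; last by move=> h /andP[_ kh]; apply: dprod0.
rewrite rmorph_sum reidx /Ek mulr_sumr; apply: eq_bigr => h /andP[_ kh].
rewrite big_setU1 //= mderivM dprod0 // mulr0 addr0 expr2 mderivM dX1.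
rewrite mul1r mulr1 rmorphM rmorphD /= mevalXU rmorph_prod /=.
congr (_ * _); first by rewrite mulrDl mul1r.
by apply: eq_bigr => i _; rewrite rmorphXn /= mevalXU.
Qed.

End Poly.

Lemma gcomet_eq n a b (p : 'I_n -> algC) : (forall k, p k != 0) ->
  gcomet a.+1 b.+1 p =
  4 * ((\sum_k Ek (fun i => p i ^+ 2) k a) * (\sum_k Ek (fun i => p i ^+ 2) k b)
       - S (fun i => p i ^+ 2) a b).
Proof.
move=> hp; set x := (fun i => p i ^+ 2).
rewrite /gcomet /S mulr_suml -sumrB mulr_sumr; apply: eq_bigr => k _.
have -> : \sum_(l < n) gflat p k l * (mderiv k (uinv n a.+1)).@[p] *
      (mderiv l (uinv n b.+1)).@[p] =
    \sum_(l < n) 4 * ((if k == l then 0 else 1) * Ek x k a * Ek x l b).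
  apply: eq_bigr => l _; rewrite !uinv_deriv /gflat.
  case: eqP => [->|/eqP kl]; first by rewrite !mul0r mulr0.
  have := hp k; have := hp l => hl hk.
  by field; apply/andP; split.
rewrite -mulr_sumr; congr (_ * _).
rewrite mulr_sumr [X in _ = X - _](bigD1 k) //= addrAC subrr add0r.
rewrite (bigD1 k) //= eqxx !mul0r add0r; apply: eq_bigr => l kl.
by rewrite eq_sym (negbTE kl) mul1r.
Qed.

Definition Ev n c : {mpoly algC[n]} :=
  if c is c'.+1 then (if (insub c' : option 'I_n) is Some t then 'X_t else 0) else 1.

Definition Gp n a b : {mpoly algC[n]} :=
  (4 : algC) *: ( (((n - a)%N)%:R * ((n - b.+1)%N)%:R : algC) *: (Ev n a * Ev n b)
       - \sum_(m < b) ((b%:R - a%:R - 2 * (m.+1)%:R) : algC) *: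
            (Ev n (a + m.+1)%N * Ev n (b - m.+1)%N)).

Lemma Ev_comp n c : Ev n c \mPo u_tuple n = uinv n c.
Proof.
case: c => [|c] /=.
  by rewrite comp_mpoly1 /uinv mesym0E comp_mpoly1.
case: insubP => [t _ tc|].
  by rewrite comp_mpolyXU /u_tuple nth_mktuple tc.
rewrite -leqNgt => nc.
by rewrite comp_mpoly0 /uinv mesym_geqnE ?comp_mpoly0.
Qed.

Lemma Ev_eval n c (p : 'I_n -> algC) :
  (Ev n c).@[fun m : 'I_n => (uinv n (val m).+1).@[p]] = (uinv n c).@[p].
Proof.
rewrite -Ev_comp comp_mpoly_meval; apply: meval_eq => i /=.
by rewrite tnth_mktuple.
Qed.

Lemma prodX2_homog n (s : seq 'I_n) :
  \prod_(i <- s) ('X_i : {mpoly algC[n]}) ^+ 2 \is (2 * size s)%N.-homog.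
Proof.
elim: s => [|i s IH]; first by rewrite big_nil muln0 dhomog1.
rewrite big_cons /= mulnS; apply: dhomogM => //.
have := dhomogMn 2 (_ : ('X_i : {mpoly algC[n]}) \is 1.-homog).
by rewrite mul1n; apply; rewrite dhomogX; apply/eqP; apply: mdeg1.
Qed.

Lemma uinv_homog n c : uinv n c \is (2 * c)%N.-homog.
Proof.
rewrite uinvE; apply: rpred_sum => h /eqP hc.
by rewrite -big_enum /= -hc cardE; apply: prodX2_homog.
Qed.

Definition lin n (q : {mpoly algC[n]}) :=
  forall m, m \in msupp q -> forall t : 'I_n, val t = (n - 2)%N -> (m t <= 1)%N.

Lemma lin0 n : lin (0 : {mpoly algC[n]}).
Proof.
have h : msupp (0 : {mpoly algC[n]}) = [::] by apply/eqP; rewrite msupp_eq0.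
by move=> m; rewrite h.
Qed.

Lemma linD n (p q : {mpoly algC[n]}) : lin p -> lin q -> lin (p + q).
Proof.
move=> hp hq m /msuppD_le; rewrite mem_cat => /orP[]; [exact: hp | exact: hq].
Qed.

Lemma linZ n c (p : {mpoly algC[n]}) : lin p -> lin (c *: p).
Proof. by move=> hp m /msuppZ_le; exact: hp. Qed.

Lemma linN n (p : {mpoly algC[n]}) : lin p -> lin (- p).
Proof. by move=> hp; rewrite -scaleN1r; apply: linZ. Qed.

Lemma lin_sum n (I : finType) (F : I -> {mpoly algC[n]}) :
  (forall i, lin (F i)) -> lin (\sum_i F i).
Proof.
by move=> hF; apply: (big_ind (@lin n)) => //; [exact: lin0 | exact: linD].
Qed.

Lemma Ev_cases n c : (2 <= n)%N -> Ev n c = 0 \/ exists mm, Ev n c = 'X_[mm] /\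
  (forall t : 'I_n, val t = (n - 2)%N -> (mm t <= (c == (n - 1)%N))%N).
Proof.
move=> hn; case: c => [|c] /=.
  by right; exists 0%MM; rewrite mpolyX0; split => // t _; rewrite mnm0E.
case: insubP => [t0 _ tc|]; last by left.
right; exists U_(t0)%MM; split => // t ht; rewrite mnm1E.
case: eqP => // e; rewrite -e tc in ht; rewrite ht.
by case: eqP => // ne; exfalso; lia.
Qed.

Lemma lin_EvM n a b : (2 <= n)%N -> ~~ ((a == (n - 1)%N) && (b == (n - 1)%N)) ->
  lin (Ev n a * Ev n b).
Proof.
move=> hn hab.
case: (Ev_cases a hn) => [->|[m1 [-> h1]]]; first by rewrite mul0r; exact: lin0.
case: (Ev_cases b hn) => [->|[m2 [-> h2]]]; first by rewrite mulr0; exact: lin0.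
rewrite -mpolyXD => m; rewrite msuppX mem_seq1 => /eqP -> t ht.
rewrite mnmDE; have := h1 t ht; have := h2 t ht.
by move: hab; case: (a == _); case: (b == _) => //=; lia.
Qed.

Lemma Gp_lin n a b : (2 <= n)%N -> (b < n)%N -> lin (Gp n a b).
Proof.
move=> hn hb; apply: linZ; apply: linD; last first.
  apply: linN; apply: lin_sum => m; apply: linZ; apply: lin_EvM => //.
  apply/negP => /andP[_ /eqP]; have := ltn_ord m; lia.
case: (boolP ((a == (n - 1)%N) && (b == (n - 1)%N))) => [/andP[_ /eqP hb1]|hab].
  have -> : (n - b.+1)%N = 0%N by lia.
  by rewrite mulr0 scale0r; exact: lin0.
by apply: linZ; apply: lin_EvM.
Qed.

Lemma Gp_homog n a b : Gp n a b \mPo u_tuple n \is (2 * a + 2 * b)%N.-homog.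
Proof.
rewrite /Gp linearZ /=; apply: rpredZ.
rewrite raddfB /=; apply: rpredB.
  rewrite linearZ /= rpredZ // rmorphM /= !Ev_comp.
  by apply: dhomogM; apply: uinv_homog.
rewrite raddf_sum; apply: rpred_sum => m _.
rewrite /= comp_mpolyZ rpredZ // rmorphM /= !Ev_comp.
have -> : (2 * a + 2 * b = 2 * (a + m.+1) + 2 * (b - m.+1))%N.
  by have := ltn_ord m; lia.
by apply: dhomogM; apply: uinv_homog.
Qed.

Lemma mevalZ' n (v : 'I_n -> algC) (c : algC) (q : {mpoly algC[n]}) :
  (c *: q).@[v] = c * q.@[v].
Proof. exact: mevalZ. Qed.

Lemma Gp_eval n a b (p : 'I_n -> algC) : (forall k, p k != 0) ->
  (a < n)%N -> (b < n)%N ->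
  gcomet a.+1 b.+1 p = (Gp n a b).@[fun m : 'I_n => (uinv n (val m).+1).@[p]].
Proof.
move=> hp ha hb.
rewrite gcomet_eq // !sumEk S_closed /Gp.
rewrite mevalZ mevalB [X in _ = _ * (X - _)]mevalZ mevalM !Ev_eval [X in _ = _ * (_ - X)]rmorph_sum /=.
rewrite [X in _ = _ * (_ - X)](eq_bigr (fun m : 'I_b => (b%:R - a%:R - 2 * (m.+1)%:R) *
   ee (fun i => p i ^+ 2) (a + m.+1)%N * ee (fun i => p i ^+ 2) (b - m.+1)%N)); last first.
  by move=> m _; rewrite [LHS]mevalZ' mevalM !Ev_eval !uinv_eval mulrA.
rewrite !uinv_eval natrB ?(ltnW ha) // natrB //.
ring.
Qed.

Theorem mainTheorem5 (n : nat) (hn : (2 <= n)%N) :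
  (forall i j : nat, (1 <= i <= n)%N -> (1 <= j <= n)%N ->
    exists G : {mpoly algC[n]},
      [/\ forall p : 'I_n -> algC, (forall k, p k != 0) ->
            gcomet i j p = G.@[fun m : 'I_n => (uinv n (val m).+1).@[p]],
          (G \mPo u_tuple n) \is (2 * i + 2 * j - 4)%N.-homog
      & forall m, m \in msupp G ->
            forall t : 'I_n, val t = (n - 2)%N -> (m t <= 1)%N]) /\
  (forall p : 'I_n -> algC, (forall k, p k != 0) ->
     gcomet 1 1 p = 4 * (n ^ 2 - n)%:R).
Proof.
split.
  move=> i j /andP[i1 iN] /andP[j1 jN].
  case: i i1 iN => // a _ aN; case: j j1 jN => // b _ bN.
  exists (Gp n a b); split.
  - by move=> p hp; apply: Gp_eval.
  - have -> : (2 * a.+1 + 2 * b.+1 - 4 = 2 * a + 2 * b)%N by lia.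
    exact: Gp_homog.
  - by move=> m hm t ht; apply: (Gp_lin hn bN hm ht).
move=> p hp; rewrite gcomet_eq // !sumEk S0 ee0.
have hn2 : (n <= n ^ 2)%N by rewrite -mulnn; nia.
rewrite natrB // natrX; ring.
Qed.
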